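(* Let $\varphi$ be a rational self-map of $\mathbb{D}$ having order of contact $n$ (even) with $\partial\mathbb{D}$ at $\zeta$, let $\lambda=\varphi(\zeta)$, and let $\sigma$ be a branch of $\varphi_e^{-1}$ defined on a neighborhood of $\lambda$ with $\sigma(\lambda)=\zeta$. Then $\sigma$ has order of contact $n$ with $\partial\mathbb{D}$ at $\lambda$.
   Context: $\varphi_e=\rho\circ\varphi\circ\rho$ with $\rho(z)=1/\bar z$; since $\varphi_e$ maps $\{|z|>1\}$ into itself, $\varphi_e^{-1}(\mathbb{D})\subset\mathbb{D}$, so $\sigma$ maps points of $\mathbb{D}$ near $\lambda$ into $\mathbb{D}$. Order of contact $c$ of a map $\varphi$ (analytic on $V\cap\mathbb{D}$ for a neighborhood $V$ of $\zeta$, with values in $\mathbb{D}$) at $\zeta$: $\lim_{z\to\zeta}\varphi(z)=\varphi(\zeta)\in\partial\mathbb{D}$ exists and $\frac{1-|\varphi(e^{i\theta})|^2}{|\varphi(\zeta)-\varphi(e^{i\theta})|^c}$ is essentially bounded above and away from zero as $e^{i\theta}\to\zeta$. *)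

(* Defs.v *)
From Stdlib Require Import Reals Lra List.
Open Scope R_scope.

Definition Cx := (R * R)%type.

Definition Cadd (z w : Cx) : Cx := (fst z + fst w, snd z + snd w).
Definition Copp (z : Cx) : Cx := (- fst z, - snd z).
Definition Csub (z w : Cx) : Cx := Cadd z (Copp w).
Definition Cmul (z w : Cx) : Cx :=
  (fst z * fst w - snd z * snd w, fst z * snd w + snd z * fst w).
Definition Cnorm2 (z : Cx) : R := fst z * fst z + snd z * snd z.
Definition Cinv (z : Cx) : Cx := (fst z / Cnorm2 z, - snd z / Cnorm2 z).
Definition Cdiv (z w : Cx) : Cx := Cmul z (Cinv w).
Definition Cconj (z : Cx) : Cx := (fst z, - snd z).
Definition Cabs (z : Cx) : R := sqrt (Cnorm2 z).
Definition C0 : Cx := (0, 0).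

(* Horner evaluation of a polynomial given by its coefficient list
   [a_0; a_1; ...; a_d] (constant term first). *)
Fixpoint peval (p : list Cx) (z : Cx) : Cx :=
  match p with
  | nil => C0
  | a :: p' => Cadd a (Cmul z (peval p' z))
  end.

Definition holo_at (f : Cx -> Cx) (z : Cx) : Prop :=
  exists l : Cx, forall eps, 0 < eps -> exists del, 0 < del /\
    forall h : Cx, 0 < Cabs h < del ->
      Cabs (Csub (Cdiv (Csub (f (Cadd z h)) (f z)) h) l) < eps.

(* phi is a rational self-map of the unit disc D: phi = p/q with q having no
   zero on the closed disc (true for the reduced form of any rational map that
   is bounded on D), and phi maps D into D. *)
Definition RationalSelfMap (phi : Cx -> Cx) : Prop :=
  exists p q : list Cx,
    (forall z, Cabs z <= 1 -> peval q z <> C0) /\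
    (forall z, peval q z <> C0 -> phi z = Cdiv (peval p z) (peval q z)) /\
    (forall z, Cabs z < 1 -> Cabs (phi z) < 1).

Definition rho (z : Cx) : Cx := Cinv (Cconj z).
Definition phi_e (phi : Cx -> Cx) (z : Cx) : Cx := rho (phi (rho z)).

Definition OrderOfContact (f : Cx -> Cx) (zeta : Cx) (c : R) : Prop :=
  Cabs zeta = 1 /\
  (exists r, 0 < r /\ forall z, Cabs (Csub z zeta) < r -> Cabs z < 1 ->
      holo_at f z /\ Cabs (f z) < 1) /\
  (forall eps, 0 < eps -> exists del, 0 < del /\ forall z,
      Cabs z < 1 -> Cabs (Csub z zeta) < del -> Cabs (Csub (f z) (f zeta)) < eps) /\
  Cabs (f zeta) = 1 /\
  (exists del m M, 0 < del /\ 0 < m /\ 0 < M /\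
     forall w, Cabs w = 1 -> 0 < Cabs (Csub w zeta) < del ->
       f w <> f zeta /\
       m <= (1 - Cabs (f w) ^ 2) / Rpower (Cabs (Csub (f zeta) (f w))) c <= M).

Definition BranchOfInverse (g sigma : Cx -> Cx) (lam zeta : Cx) : Prop :=
  sigma lam = zeta /\
  exists r, 0 < r /\ forall w, Cabs (Csub w lam) < r ->
    holo_at sigma w /\ g (sigma w) = w.

(* Main.v *)
Require Import Defs.
From Stdlib Require Import Reals Arith Lra Lia List.
From Coquelicot Require Import Complex.
Open Scope R_scope.

Lemma Cabs_mod z : Cabs z = Cmod z.
Proof. destruct z as [a b]; unfold Cabs, Cnorm2, Cmod; simpl; f_equal; ring. Qed.
Lemma Csub_eq a b : Csub a b = (a - b)%C.
Proof. reflexivity. Qed.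
Lemma Cadd_eq a b : Cadd a b = (a + b)%C.
Proof. reflexivity. Qed.
Lemma Cmul_eq a b : Cmul a b = (a * b)%C.
Proof. reflexivity. Qed.
Lemma Cinv_eq z : Defs.Cinv z = (/ z)%C.
Proof. destruct z as [a b]; unfold Defs.Cinv, Complex.Cinv, Cnorm2; simpl.
  rewrite !Rmult_1_r; reflexivity. Qed.
Lemma Cdiv_eq a b : Defs.Cdiv a b = (a / b)%C.
Proof. unfold Defs.Cdiv, Complex.Cdiv; rewrite Cinv_eq; reflexivity. Qed.
Lemma Cconj_eq a : Defs.Cconj a = Complex.Cconj a.
Proof. reflexivity. Qed.
Lemma C0_eq : C0 = RtoC 0.
Proof. reflexivity. Qed.
Lemma rho_eq z : rho z = (/ Complex.Cconj z)%C.
Proof. unfold rho; rewrite Cinv_eq; reflexivity. Qed.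
Lemma peval_cons a p z : peval (a :: p) z = (a + z * peval p z)%C.
Proof. reflexivity. Qed.
Lemma peval_nil z : peval nil z = RtoC 0.
Proof. reflexivity. Qed.

Definition holo (f : C -> C) (z : C) : Prop :=
  exists l : C, forall eps, 0 < eps -> exists del, 0 < del /\
    forall h : C, 0 < Cmod h < del ->
      Cmod ((f (z + h) - f z) / h - l)%C < eps.
Lemma holo_eq f z : holo_at f z <-> holo f z.
Proof. unfold holo_at, holo. setoid_rewrite Cabs_mod. setoid_rewrite Csub_eq.
  setoid_rewrite Cdiv_eq. setoid_rewrite Cadd_eq. tauto. Qed.

Lemma Cmod_nonneg z : 0 <= Cmod z. Proof. apply Cmod_ge_0. Qed.
Lemma Cmod_sym a b : Cmod (a - b)%C = Cmod (b - a)%C.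
Proof. replace (b - a)%C with (- (a - b))%C by ring. now rewrite Cmod_opp. Qed.
Lemma Cmod_tri3 a b c : Cmod (a - c)%C <= Cmod (a - b)%C + Cmod (b - c)%C.
Proof. replace (a - c)%C with ((a - b) + (b - c))%C by ring. apply Cmod_triangle. Qed.
Lemma Cmod_rev a b : Cmod a - Cmod b <= Cmod (a - b)%C.
Proof. pose proof (Cmod_triangle (a - b) b). replace (a - b + b)%C with a in H by ring. lra. Qed.
Lemma Cmod_plus_le a b : Cmod (a + b)%C <= Cmod a + Cmod b. Proof. apply Cmod_triangle. Qed.
Lemma Cmod_minus_le a b : Cmod (a - b)%C <= Cmod a + Cmod b.
Proof. unfold Cminus. rewrite <- (Cmod_opp b). apply Cmod_triangle. Qed.
Lemma Re_le_Cmod z : Re z <= Cmod z.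
Proof. pose proof (re_le_Cmod z). unfold Rabs in H; destruct Rcase_abs in H; lra. Qed.
Lemma Re_ge_Cmod z : - Cmod z <= Re z.
Proof. pose proof (re_le_Cmod z). unfold Rabs in H; destruct Rcase_abs in H; lra. Qed.
Lemma Cmod_sq z : Cmod z ^ 2 = Re z * Re z + Im z * Im z.
Proof. rewrite Cmod2_alt. ring. Qed.
Lemma Cmod_sq_expand u x :
  Cmod (u + x)%C ^ 2 = Cmod u ^ 2 + 2 * Re (Cconj u * x)%C + Cmod x ^ 2.
Proof. rewrite !Cmod_sq. destruct u as [a b], x as [c d]. simpl. ring. Qed.
Lemma Re_plus a b : Re (a + b)%C = Re a + Re b. Proof. reflexivity. Qed.
Lemma Re_scal (r : R) z : Re (RtoC r * z)%C = r * Re z.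
Proof. destruct z; simpl. ring. Qed.
Lemma Cmod_eq_0_iff z : Cmod z = 0 <-> z = RtoC 0.
Proof. split. apply Cmod_eq_0. intros ->. apply Cmod_0. Qed.
Lemma Cmod_pos z : z <> RtoC 0 -> 0 < Cmod z.
Proof. intros. now apply Cmod_gt_0. Qed.
Lemma Cmod_RtoC_pos r : 0 <= r -> Cmod (RtoC r) = r.
Proof. intros. rewrite Cmod_R. now apply Rabs_right, Rle_ge. Qed.
Lemma Cmod_mult3 a b c : Cmod (a*b*c)%C = Cmod a * Cmod b * Cmod c.
Proof. now rewrite !Cmod_mult. Qed.

Lemma Cconj_neq0 z : z <> RtoC 0 -> Cconj z <> RtoC 0.
Proof. intros H E. apply H. rewrite <- (Cconj_conj z), E. apply injective_projections; simpl; lra. Qed.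
Lemma Cinv_zero : (/ RtoC 0)%C = RtoC 0.
Proof. unfold Cinv, RtoC, Rdiv; simpl. apply injective_projections; simpl; ring. Qed.
Lemma Cconj_zero : Cconj (RtoC 0) = RtoC 0.
Proof. apply injective_projections; simpl; lra. Qed.
Lemma rho_invol z : (/ Cconj (/ Cconj z))%C = z.
Proof. destruct (Ceq_dec z (RtoC 0)) as [->|H].
  - now rewrite Cconj_zero, Cinv_zero, Cconj_zero, Cinv_zero.
  - rewrite Cinv_conj by now apply Cconj_neq0. rewrite Cconj_conj. field; auto. Qed.
Lemma rho_mod z : Cmod (/ Cconj z)%C = / Cmod z.
Proof. destruct (Ceq_dec z (RtoC 0)) as [->|H].
  - now rewrite Cconj_zero, Cinv_zero, Cmod_0, Rinv_0.
  - rewrite Cmod_inv by now apply Cconj_neq0. now rewrite Cmod_conj. Qed.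
Lemma rho_dist x y : x <> RtoC 0 -> y <> RtoC 0 ->
  Cmod (/ Cconj x - / Cconj y)%C = Cmod (x - y)%C / (Cmod x * Cmod y).
Proof. intros Hx Hy. pose proof (Cconj_neq0 _ Hx). pose proof (Cconj_neq0 _ Hy).
  replace (/ Cconj x - / Cconj y)%C with (Cconj (y - x) / (Cconj x * Cconj y))%C.
  - rewrite Cmod_div. rewrite Cmod_mult, !Cmod_conj, Cmod_sym. reflexivity.
    now apply Cmult_neq_0.
  - rewrite Cminus_conj. field. auto.
Qed.
Lemma rho_unit z : Cmod z = 1 -> (/ Cconj z)%C = z.
Proof. intros H. pose proof (Cmod_sq z) as H1. rewrite H in H1.
  destruct z as [a b]. simpl in H1. unfold Cinv, Cconj; simpl.
  replace (a * (a * 1) + - b * (- b * 1)) with 1 by lra.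
  apply injective_projections; simpl; field.
Qed.

Definition cont2 (F : C -> C -> C) (z : C) : Prop :=
  forall eps, 0 < eps -> exists del, 0 < del /\ forall a b,
    Cmod (a - z)%C < del -> Cmod (b - z)%C < del -> Cmod (F a b - F z z)%C < eps.

Lemma cont2_const c z : cont2 (fun _ _ => c) z.
Proof. intros eps He. exists 1. split; [lra|]. intros. replace (c - c)%C with (RtoC 0) by ring.
  rewrite Cmod_0; lra. Qed.
Lemma cont2_fst z : cont2 (fun a _ => a) z.
Proof. intros eps He. exists eps. split; [lra|]. intros; auto. Qed.
Lemma cont2_snd z : cont2 (fun _ b => b) z.
Proof. intros eps He. exists eps. split; [lra|]. intros; auto. Qed.
Lemma cont2_plus F G z : cont2 F z -> cont2 G z -> cont2 (fun a b => F a b + G a b)%C z.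
Proof. intros HF HG eps He. destruct (HF (eps/2)) as [d1 [Hd1 H1]]; [lra|].
  destruct (HG (eps/2)) as [d2 [Hd2 H2]]; [lra|]. exists (Rmin d1 d2). split.
  apply Rmin_pos; auto. intros a b Ha Hb.
  pose proof (Rmin_l d1 d2). pose proof (Rmin_r d1 d2).
  specialize (H1 a b ltac:(lra) ltac:(lra)). specialize (H2 a b ltac:(lra) ltac:(lra)).
  replace (F a b + G a b - (F z z + G z z))%C with ((F a b - F z z) + (G a b - G z z))%C by ring.
  pose proof (Cmod_triangle (F a b - F z z) (G a b - G z z)). lra. Qed.
Lemma cont2_mult F G z : cont2 F z -> cont2 G z -> cont2 (fun a b => F a b * G a b)%C z.
Proof. intros HF HG eps He. set (A := Cmod (F z z)). set (B := Cmod (G z z)).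
  assert (0 <= A) by apply Cmod_nonneg. assert (0 <= B) by apply Cmod_nonneg.
  destruct (HF (eps/(2*(B+1)))) as [d1 [Hd1 H1]]. { apply Rdiv_lt_0_compat; lra. }
  destruct (HG (Rmin 1 (eps/(2*(A+1))))) as [d2 [Hd2 H2]].
  { apply Rmin_pos; [lra|]. apply Rdiv_lt_0_compat; lra. }
  exists (Rmin d1 d2). split. apply Rmin_pos; auto. intros a b Ha Hb.
  pose proof (Rmin_l d1 d2). pose proof (Rmin_r d1 d2).
  specialize (H1 a b ltac:(lra) ltac:(lra)). specialize (H2 a b ltac:(lra) ltac:(lra)).
  pose proof (Rmin_l 1 (eps/(2*(A+1)))). pose proof (Rmin_r 1 (eps/(2*(A+1)))).
  replace (F a b * G a b - F z z * G z z)%C with ((F a b - F z z) * G a b + F z z * (G a b - G z z))%C by ring.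
  eapply Rle_lt_trans. apply Cmod_triangle. rewrite !Cmod_mult.
  assert (Cmod (G a b) <= B + 1).
  { pose proof (Cmod_rev (G a b) (G z z)) as HR. fold B in HR. lra. }
  assert (Cmod (F a b - F z z) * Cmod (G a b) <= eps/(2*(B+1)) * (B+1)).
  { apply Rmult_le_compat; try apply Cmod_nonneg; lra. }
  assert (A * Cmod (G a b - G z z) <= A * (eps / (2 * (A + 1)))).
  { apply Rmult_le_compat_l; lra. }
  fold A.
  assert (eps / (2 * (B + 1)) * (B + 1) = eps/2) by (field; lra).
  assert (A * (eps / (2 * (A + 1))) < eps/2).
  { replace (A * (eps / (2 * (A + 1)))) with ((eps/2) * (A/(A+1))) by (field; lra).
    assert (A / (A+1) < 1). { apply Rmult_lt_reg_r with (A+1); [lra|].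
      replace (A / (A + 1) * (A + 1)) with A by (field; lra). lra. }
    nra. }
  lra. Qed.
Lemma cont2_inv F z : cont2 F z -> F z z <> RtoC 0 -> cont2 (fun a b => / F a b)%C z.
Proof. intros HF Hn eps He. set (A := Cmod (F z z)). assert (0 < A) by now apply Cmod_pos.
  destruct (HF (Rmin (A/2) (eps*A*A/2))) as [d [Hd H1]].
  { apply Rmin_pos. lra. apply Rdiv_lt_0_compat; [|lra]. repeat apply Rmult_lt_0_compat; lra. }
  exists d; split; auto. intros a b Ha Hb. specialize (H1 a b Ha Hb).
  pose proof (Rmin_l (A/2) (eps*A*A/2)). pose proof (Rmin_r (A/2) (eps*A*A/2)).
  assert (HFa : A/2 < Cmod (F a b)). { pose proof (Cmod_rev (F z z) (F a b)) as HR. rewrite Cmod_sym in HR. fold A in HR. lra. }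
  assert (F a b <> RtoC 0). { intro E. rewrite E, Cmod_0 in HFa. lra. }
  replace (/ F a b - / F z z)%C with ((F z z - F a b) / (F a b * F z z))%C by (field; auto).
  rewrite Cmod_div by now apply Cmult_neq_0. rewrite Cmod_mult, Cmod_sym. fold A.
  apply Rmult_lt_reg_r with (Cmod (F a b) * A). { apply Rmult_lt_0_compat; lra. }
  unfold Rdiv. rewrite Rmult_assoc, Rinv_l by (apply Rgt_not_eq; apply Rmult_lt_0_compat; lra).
  rewrite Rmult_1_r.
  assert (eps * (A/2) * A <= eps * Cmod (F a b) * A).
  { apply Rmult_le_compat_r; [lra|]. apply Rmult_le_compat_l; lra. }
  assert (eps * (A/2) * A = eps * A * A / 2) by field. lra. Qed.
Lemma cont2_opp F z : cont2 F z -> cont2 (fun a b => - F a b)%C z.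
Proof. intros HF eps He. destruct (HF eps He) as [d [Hd H]]. exists d; split; auto.
  intros a b Ha Hb. replace (- F a b - - F z z)%C with (- (F a b - F z z))%C by ring.
  rewrite Cmod_opp. auto. Qed.
Lemma cont2_minus F G z : cont2 F z -> cont2 G z -> cont2 (fun a b => F a b - G a b)%C z.
Proof. intros. apply cont2_plus; auto. apply cont2_opp; auto. Qed.
Lemma cont2_div F G z : cont2 F z -> cont2 G z -> G z z <> RtoC 0 -> cont2 (fun a b => F a b / G a b)%C z.
Proof. intros. apply cont2_mult; auto. apply cont2_inv; auto. Qed.

Lemma cont2_peval_fst p z : cont2 (fun a _ => peval p a) z.
Proof. induction p as [|c p IH]; simpl.
  - apply cont2_const.
  - apply (cont2_plus (fun _ _ => c) (fun a _ => Cmul a (peval p a))). apply cont2_const.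
    apply (cont2_mult (fun a _ => a) (fun a _ => peval p a)). apply cont2_fst. auto. Qed.
Lemma cont2_peval_snd p z : cont2 (fun _ b => peval p b) z.
Proof. induction p as [|c p IH]; simpl.
  - apply cont2_const.
  - apply (cont2_plus (fun _ _ => c) (fun _ b => Cmul b (peval p b))). apply cont2_const.
    apply (cont2_mult (fun _ b => b) (fun _ b => peval p b)). apply cont2_snd. auto. Qed.

Fixpoint dqp (p : list C) (a b : C) : C :=
  match p with nil => RtoC 0 | c :: p' => (peval p' a + b * dqp p' a b)%C end.
Lemma dqp_spec p a b : (peval p a - peval p b)%C = ((a - b) * dqp p a b)%C.
Proof. induction p as [|c p IH]; simpl.
  - change C0 with (RtoC 0). ring.
  - change (Cadd c (Cmul a (peval p a))) with (c + a * peval p a)%C.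
    change (Cadd c (Cmul b (peval p b))) with (c + b * peval p b)%C.
    replace (c + a * peval p a - (c + b * peval p b))%C with
      ((a - b) * peval p a + b * (peval p a - peval p b))%C by ring.
    rewrite IH. ring. Qed.
Lemma cont2_dqp p z : cont2 (dqp p) z.
Proof. induction p as [|c p IH]; simpl.
  - apply cont2_const.
  - apply (cont2_plus (fun a _ => peval p a) (fun a b => b * dqp p a b)%C).
    apply cont2_peval_fst. apply (cont2_mult (fun _ b => b) (dqp p)). apply cont2_snd. auto. Qed.

Lemma step1 (p q : list C) (phi : C -> C) zeta :
  peval q zeta <> RtoC 0 -> (forall z, peval q z <> RtoC 0 -> phi z = (peval p z / peval q z)%C) ->
  exists D, forall eps, 0 < eps -> exists del, 0 < del /\ forall a b,
    Cmod (a - zeta)%C < del -> Cmod (b - zeta)%C < del ->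
    Cmod (phi a - phi b - D * (a - b))%C <= eps * Cmod (a - b)%C.
Proof.
  intros Hqz Hphi.
  set (G := fun a b => ((dqp p a b * peval q b - peval p b * dqp q a b) / (peval q a * peval q b))%C).
  assert (HG : cont2 G zeta).
  { unfold G. apply cont2_div.
    - apply cont2_minus. apply cont2_mult. apply cont2_dqp. apply cont2_peval_snd.
      apply cont2_mult. apply cont2_peval_snd. apply cont2_dqp.
    - apply cont2_mult. apply cont2_peval_fst. apply cont2_peval_snd.
    - now apply Cmult_neq_0. }
  exists (G zeta zeta). intros eps He.
  destruct (HG eps He) as [d1 [Hd1 H1]].
  destruct (cont2_peval_fst q zeta (Cmod (peval q zeta)) ltac:(now apply Cmod_pos)) as [d2 [Hd2 H2]].
  exists (Rmin d1 d2). split. now apply Rmin_pos. intros a b Ha Hb.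
  pose proof (Rmin_l d1 d2). pose proof (Rmin_r d1 d2).
  assert (Hq : forall x, Cmod (x - zeta)%C < Rmin d1 d2 -> peval q x <> RtoC 0).
  { intros x Hx E. specialize (H2 x x ltac:(lra) ltac:(lra)). simpl in H2. rewrite E in H2.
    replace (RtoC 0 - peval q zeta)%C with (- peval q zeta)%C in H2 by ring. rewrite Cmod_opp in H2. lra. }
  pose proof (Hq a Ha) as Hqa. pose proof (Hq b Hb) as Hqb.
  rewrite (Hphi a Hqa), (Hphi b Hqb).
  assert (E : (peval p a / peval q a - peval p b / peval q b)%C = ((a - b) * G a b)%C).
  { unfold G.
    replace ((a - b) * ((dqp p a b * peval q b - peval p b * dqp q a b) / (peval q a * peval q b)))%C
      with ((((a-b) * dqp p a b) * peval q b - peval p b * ((a - b) * dqp q a b)) / (peval q a * peval q b))%C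
      by (field; auto).
    rewrite <- !dqp_spec. field. auto. }
  rewrite E. replace ((a - b) * G a b - G zeta zeta * (a - b))%C with ((a - b) * (G a b - G zeta zeta))%C by ring.
  rewrite Cmod_mult. rewrite Rmult_comm. apply Rmult_le_compat_r. apply Cmod_nonneg.
  left. apply H1; lra.
Qed.

Lemma holo_lip f z : holo f z -> exists K d, 0 < K /\ 0 < d /\
  forall w, Cmod (w - z)%C < d -> Cmod (f w - f z)%C <= K * Cmod (w - z)%C.
Proof. intros [l Hl]. destruct (Hl 1 ltac:(lra)) as [d [Hd H]].
  exists (Cmod l + 1), d. pose proof (Cmod_nonneg l). split; [lra|]. split; auto.
  intros w Hw. destruct (Ceq_dec w z) as [->|Hne].
  - replace (f z - f z)%C with (RtoC 0) by ring. rewrite Cmod_0. pose proof (Cmod_nonneg (z - z)%C). nra.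
  - assert (Hh : (w - z)%C <> RtoC 0). { intro E. apply Hne. replace w with ((w - z) + z)%C by ring. rewrite E. ring. }
    pose proof (Cmod_pos _ Hh). specialize (H (w - z)%C ltac:(lra)).
    replace (z + (w - z))%C with w in H by ring.
    replace (f w - f z)%C with (((f w - f z) / (w - z) - l) * (w - z) + l * (w - z))%C by (field; auto).
    eapply Rle_trans. apply Cmod_triangle. rewrite !Cmod_mult. nra. Qed.

Definition ecirc (s : R) : C := ((1 - s*s)/(1 + s*s), 2*s/(1+s*s)).
Lemma ecirc_mod s : Cmod (ecirc s) = 1.
Proof. assert (H : Cmod (ecirc s) ^ 2 = 1).
  { rewrite Cmod_sq. unfold ecirc; simpl. assert (0 < 1 + s*s) by nra. field. lra. }
  pose proof (Cmod_nonneg (ecirc s)). nra. Qed.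
Lemma ecirc_sub s : Cmod (ecirc s - 1)%C <= 2 * Rabs s.
Proof. assert (Hp : 0 < 1 + s*s) by nra.
  assert (E : Cmod (ecirc s - 1)%C ^ 2 = 4*(s*s)/(1+s*s)).
  { rewrite Cmod_sq. unfold ecirc; simpl. field. lra. }
  assert (E2 : (2 * Rabs s)^2 = 4 * (s*s)).
  { replace ((2*Rabs s)^2) with (4 * Rabs s ^ 2) by ring; rewrite pow2_abs; ring. }
  assert (H : Cmod (ecirc s - 1)%C ^ 2 <= (2 * Rabs s) ^ 2).
  { rewrite E, E2. apply Rmult_le_reg_r with (1 + s*s); [lra|].
    replace (4 * (s * s) / (1 + s * s) * (1 + s * s)) with (4*(s*s)) by (field; lra).
    assert (0 <= (s*s)*(s*s)) by (apply Rmult_le_pos; nra). nra. }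
  pose proof (Rabs_pos s). pose proof (Cmod_nonneg (ecirc s - 1)%C). nra. Qed.
Lemma ecirc_neq1 s : s <> 0 -> ecirc s <> RtoC 1.
Proof. intros Hs E. assert (Hp : 0 < 1 + s*s) by nra. assert (snd (ecirc s) = 0) by (rewrite E; reflexivity).
  unfold ecirc in H; simpl in H. apply Hs. apply Rmult_eq_reg_r with (2 / (1 + s*s)).
  replace (s * (2 / (1 + s * s))) with (2 * s / (1 + s * s)) by (field; lra). lra.
  apply Rgt_not_eq. apply Rdiv_lt_0_compat; lra. Qed.
Lemma ecirc_im s : Im (ecirc s - 1)%C = 2*s/(1+s*s).
Proof. unfold ecirc; simpl. ring. Qed.
Lemma ecirc_re s : Re (ecirc s - 1)%C = - 2*(s*s)/(1+s*s).
Proof. unfold ecirc; simpl. assert (0 < 1 + s*s) by nra. field. lra. Qed.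

Definition C1est (phi : C -> C) zeta D := forall eps, 0 < eps -> exists del, 0 < del /\ forall a b,
    Cmod (a - zeta)%C < del -> Cmod (b - zeta)%C < del ->
    Cmod (phi a - phi b - D * (a - b))%C <= eps * Cmod (a - b)%C.

Lemma step2 phi sigma zeta D r1 :
  Cmod zeta = 1 -> Cmod (phi zeta) = 1 -> sigma (phi zeta) = zeta -> holo sigma (phi zeta) -> 0 < r1 ->
  (forall w, Cmod (w - phi zeta)%C < r1 -> (/ Cconj (phi (/ Cconj (sigma w))))%C = w) ->
  C1est phi zeta D -> D <> RtoC 0.
Proof.
  intros Hz Hl Hs Hh Hr1 Hbr HC1 HD. set (lam := phi zeta) in *.
  destruct (holo_lip _ _ Hh) as [K [d [HK [Hd Hlip]]]].
  destruct (HC1 (1/(8*K))) as [d1 [Hd1 H1]]. { apply Rdiv_lt_0_compat; lra. }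
  set (s := Rmin (Rmin d r1) (Rmin (1/(2*K)) (Rmin (d1/(2*K)) 1)) / 2).
  assert (Hs0 : 0 < s). { unfold s. assert (0 < Rmin (Rmin d r1) (Rmin (1/(2*K)) (Rmin (d1/(2*K)) 1))); [|lra].
    repeat apply Rmin_pos; try apply Rdiv_lt_0_compat; lra. }
  assert (Hsd : s < d /\ s < r1 /\ s <= 1/(4*K) /\ s <= d1/(4*K) /\ s <= 1/2).
  { unfold s. pose proof (Rmin_l (Rmin d r1) (Rmin (1/(2*K)) (Rmin (d1/(2*K)) 1))).
    pose proof (Rmin_r (Rmin d r1) (Rmin (1/(2*K)) (Rmin (d1/(2*K)) 1))).
    pose proof (Rmin_l d r1). pose proof (Rmin_r d r1).
    pose proof (Rmin_l (1/(2*K)) (Rmin (d1/(2*K)) 1)). pose proof (Rmin_r (1/(2*K)) (Rmin (d1/(2*K)) 1)).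
    pose proof (Rmin_l (d1/(2*K)) 1). pose proof (Rmin_r (d1/(2*K)) 1).
    replace (1/(4*K)) with ((1/(2*K))/2) by (field; lra).
    replace (d1/(4*K)) with ((d1/(2*K))/2) by (field; lra). lra. }
  destruct Hsd as [Hsd [Hsr [HsK [Hsd1 Hs12]]]].
  set (w := (lam + RtoC s)%C).
  assert (Hw : Cmod (w - lam)%C = s). { unfold w. replace (lam + s - lam)%C with (RtoC s) by ring. apply Cmod_RtoC_pos; lra. }
  assert (Hwm : 1/2 <= Cmod w <= 3/2).
  { pose proof (Cmod_rev w lam). pose proof (Cmod_rev lam w). rewrite Cmod_sym in H0. lra. }
  set (u := sigma w).
  assert (Hu : Cmod (u - zeta)%C <= K * s). { unfold u. rewrite <- Hs. rewrite <- Hw. apply Hlip. lra. }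
  assert (Ks : K * s <= 1/4). { apply Rmult_le_reg_l with (/K). apply Rinv_0_lt_compat; lra.
    replace (/K * (K*s)) with s by (field; lra). replace (/ K * (1/4)) with (1/(4*K)) by (field; lra). lra. }
  assert (Hum : 3/4 <= Cmod u). { pose proof (Cmod_rev zeta u). rewrite Cmod_sym in H. lra. }
  assert (Hu0 : u <> RtoC 0). { intro E. rewrite E, Cmod_0 in Hum. lra. }
  assert (Hz0 : zeta <> RtoC 0). { intro E. rewrite E, Cmod_0 in Hz. lra. }
  set (v := (/ Cconj u)%C).
  assert (Hv : Cmod (v - zeta)%C <= 2 * K * s).
  { unfold v. rewrite <- (rho_unit zeta Hz) at 1. rewrite rho_dist by auto. rewrite Hz, Rmult_1_r.
    apply Rmult_le_reg_r with (Cmod u); [lra|]. unfold Rdiv. rewrite Rmult_assoc, Rinv_l by lra.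
    assert (2*K*s*Cmod u >= 2*K*s*(3/4)) by (apply Rle_ge, Rmult_le_compat_l; nra). nra. }
  assert (Hbw := Hbr w ltac:(lra)). fold u v in Hbw.
  assert (Hpv : phi v <> RtoC 0).
  { intro E. rewrite E, Cconj_zero, Cinv_zero in Hbw. rewrite <- Hbw, Cmod_0 in Hwm. lra. }
  assert (Hpv2 : phi v = (/ Cconj w)%C). { rewrite <- Hbw. now rewrite rho_invol. }
  assert (Hd1' : 2 * K * s < d1). { replace (2*K*s) with ((4*K)*s/2) by field.
    assert (4*K*s <= d1). { apply Rmult_le_reg_l with (/(4*K)). apply Rinv_0_lt_compat; lra.
    replace (/(4*K) * (4*K*s)) with s by (field; lra). replace (/ (4*K) * d1) with (d1/(4*K)) by (field; lra). lra. }
    lra. }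
  assert (Hzz : Cmod (zeta - zeta)%C = 0). { replace (zeta - zeta)%C with (RtoC 0) by ring. apply Cmod_0. }
  specialize (H1 v zeta ltac:(lra) ltac:(lra)). rewrite HD in H1.
  replace (phi v - phi zeta - 0 * (v - zeta))%C with (phi v - lam)%C in H1 by (unfold lam; ring).
  rewrite Hpv2 in H1. rewrite <- (rho_unit lam Hl) in H1.
  assert (Hw0 : w <> RtoC 0). { intro E. rewrite E, Cmod_0 in Hwm. lra. }
  assert (Hl0 : lam <> RtoC 0). { intro E. rewrite E, Cmod_0 in Hl. lra. }
  rewrite rho_dist in H1 by auto. rewrite Hw, Hl, Rmult_1_r in H1.
  assert (1 / (8 * K) * Cmod (v - zeta) <= s/4).
  { replace (s/4) with (1/(8*K) * (2*K*s)) by (field; lra). apply Rmult_le_compat_l; auto.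
    left; apply Rdiv_lt_0_compat; lra. }
  assert (s / Cmod w >= s / (3/2)). { apply Rle_ge. unfold Rdiv. apply Rmult_le_compat_l; [lra|].
    apply Rinv_le_contravar; lra. }
  lra.
Qed.

Lemma Re_mult x y : Re (x * y)%C = Re x * Re y - Im x * Im y.
Proof. destruct x, y; simpl; ring. Qed.

Lemma sq_lower lam X e : Cmod lam = 1 ->
  1 + 2 * Re (Cconj lam * X)%C - 2 * Cmod e <= Cmod (lam + X + e)%C ^ 2.
Proof. intros Hl. replace (lam + X + e)%C with (lam + (X + e))%C by ring.
  rewrite Cmod_sq_expand, Hl. replace (Cconj lam * (X + e))%C with (Cconj lam * X + Cconj lam * e)%C by ring.
  rewrite Re_plus. pose proof (Re_ge_Cmod (Cconj lam * e)%C). rewrite Cmod_mult, Cmod_conj, Hl in H.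
  pose proof (pow2_ge_0 (Cmod (X + e)%C)). lra. Qed.

Lemma phi_decomp (phi : C -> C) zeta D a :
  phi a = (phi zeta + D * (a - zeta) + (phi a - phi zeta - D * (a - zeta)))%C.
Proof. ring. Qed.

Lemma step3 phi zeta D del0 :
  Cmod zeta = 1 -> Cmod (phi zeta) = 1 -> (forall z, Cmod z < 1 -> Cmod (phi z) < 1) -> 0 < del0 ->
  (forall w, Cmod w = 1 -> 0 < Cmod (w - zeta)%C < del0 -> Cmod (phi w) < 1) ->
  C1est phi zeta D -> D <> RtoC 0 -> 0 < Re (Cconj (phi zeta) * D * zeta)%C.
Proof.
  intros Hz Hl Hself Hd0 Hcirc HC1 HD. set (lam := phi zeta) in *.
  set (k := (Cconj lam * D * zeta)%C).
  assert (Hz0 : zeta <> RtoC 0). { intro E. rewrite E, Cmod_0 in Hz. lra. }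
  assert (Hl0 : lam <> RtoC 0). { intro E. rewrite E, Cmod_0 in Hl. lra. }
  assert (Hk0 : k <> RtoC 0). { unfold k. apply Cmult_neq_0; auto. apply Cmult_neq_0; auto. now apply Cconj_neq0. }
  destruct (Rlt_or_le 0 (Re k)) as [Hpos|Hle]; auto. exfalso.
  destruct (Rlt_or_le (Re k) 0) as [Hneg|Hge].
  - destruct (HC1 (- Re k / 2)) as [d1 [Hd1 H1]]; [lra|].
    set (s := Rmin d1 1 / 2).
    assert (Hs : 0 < s /\ s < d1 /\ s <= 1/2).
    { unfold s. pose proof (Rmin_l d1 1). pose proof (Rmin_r d1 1). pose proof (Rmin_pos d1 1 Hd1 ltac:(lra)). lra. }
    set (a := (zeta - RtoC s * zeta)%C).
    assert (Ha : Cmod (a - zeta)%C = s).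
    { unfold a. replace (zeta - s * zeta - zeta)%C with (- (s * zeta))%C by ring.
      rewrite Cmod_opp, Cmod_mult, Hz, Cmod_RtoC_pos; lra. }
    assert (Ham : Cmod a < 1).
    { unfold a. replace (zeta - s * zeta)%C with (RtoC (1 - s) * zeta)%C by (apply injective_projections; simpl; ring).
      rewrite Cmod_mult, Hz, Cmod_RtoC_pos; lra. }
    assert (Hzz : Cmod (zeta - zeta)%C = 0). { replace (zeta - zeta)%C with (RtoC 0) by ring. apply Cmod_0. }
    specialize (H1 a zeta ltac:(lra) ltac:(lra)). rewrite Ha in H1.
    pose proof (sq_lower lam (D * (a - zeta))%C (phi a - phi zeta - D * (a - zeta))%C Hl) as Hsq.
    replace (lam + D * (a - zeta) + (phi a - phi zeta - D * (a - zeta)))%C with (phi a) in Hsq by (unfold lam; ring).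
    replace (Cconj lam * (D * (a - zeta)))%C with (RtoC (- s) * k)%C in Hsq
      by (unfold k, a; apply injective_projections; simpl; ring).
    rewrite Re_scal in Hsq. replace (a - zeta - (zeta - zeta))%C with (a - zeta)%C in H1 by ring.
    pose proof (Hself a Ham). pose proof (Cmod_nonneg (phi a)).
    assert (Cmod (phi a) ^ 2 < 1) by nra. nra.
  - assert (Hk : Re k = 0) by lra.
    assert (Hb : Im k <> 0). { intro E. apply Hk0. apply injective_projections; simpl; auto. }
    set (b := Im k) in *.
    destruct (HC1 (Rabs b / 4)) as [d1 [Hd1 H1]]. { apply Rdiv_lt_0_compat; [apply Rabs_pos_lt|]; lra. }
    set (s0 := Rmin (Rmin d1 del0) 1 / 4).
    assert (Hs0 : 0 < s0 /\ 2 * s0 < d1 /\ 2 * s0 < del0 /\ s0 <= 1/4).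
    { unfold s0. pose proof (Rmin_l (Rmin d1 del0) 1). pose proof (Rmin_r (Rmin d1 del0) 1).
      pose proof (Rmin_l d1 del0). pose proof (Rmin_r d1 del0).
      pose proof (Rmin_pos (Rmin d1 del0) 1 (Rmin_pos d1 del0 Hd1 Hd0) ltac:(lra)). lra. }
    set (s := if Rlt_dec 0 b then - s0 else s0).
    assert (Hsb : - b * s = Rabs b * s0 /\ Rabs s = s0 /\ s <> 0).
    { unfold s. destruct (Rlt_dec 0 b).
      - rewrite Rabs_right by lra. rewrite Rabs_Ropp, Rabs_right by lra. split; [ring|]. lra.
      - rewrite Rabs_left by lra. rewrite Rabs_right by lra. split; [ring|]. lra. }
    destruct Hsb as [Hsb [Hss Hsn]].
    set (w := (zeta * ecirc s)%C).
    assert (Hw1 : Cmod w = 1). { unfold w. rewrite Cmod_mult, Hz, ecirc_mod. ring. }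
    assert (Hwz : (w - zeta)%C = (zeta * (ecirc s - 1))%C). { unfold w. ring. }
    assert (Hwd : 0 < Cmod (w - zeta)%C <= 2 * s0).
    { rewrite Hwz, Cmod_mult, Hz, Rmult_1_l. split.
      - apply Cmod_pos. intro E. apply (ecirc_neq1 s Hsn). replace (ecirc s) with (ecirc s - 1 + 1)%C by ring.
        rewrite E. ring.
      - rewrite <- Hss. apply ecirc_sub. }
    assert (Hzz : Cmod (zeta - zeta)%C = 0). { replace (zeta - zeta)%C with (RtoC 0) by ring. apply Cmod_0. }
    specialize (H1 w zeta ltac:(lra) ltac:(lra)).
    replace (w - zeta - (zeta - zeta))%C with (w - zeta)%C in H1 by ring.
    pose proof (sq_lower lam (D * (w - zeta))%C (phi w - phi zeta - D * (w - zeta))%C Hl) as Hsq.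
    replace (lam + D * (w - zeta) + (phi w - phi zeta - D * (w - zeta)))%C with (phi w) in Hsq by (unfold lam; ring).
    replace (Cconj lam * (D * (w - zeta)))%C with (k * (ecirc s - 1))%C in Hsq
      by (rewrite Hwz; unfold k; ring).
    rewrite Re_mult, Hk, ecirc_im in Hsq. fold b in Hsq.
    assert (Hss2 : s * s = s0 * s0). { rewrite <- Hss. rewrite <- Rabs_mult. rewrite Rabs_right; [auto|]. nra. }
    assert (Hden : 0 < 1 + s * s <= 2) by nra.
    assert (Hmain : 2 * s0 * Rabs b / 2 <= - (b * (2 * s / (1 + s*s)))).
    { replace (- (b * (2 * s / (1 + s * s)))) with (2 * (- b * s) / (1 + s*s)) by (field; lra).
      rewrite Hsb. apply Rmult_le_reg_r with (1 + s*s); [lra|].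
      replace (2 * (Rabs b * s0) / (1 + s * s) * (1 + s * s)) with (2 * (Rabs b * s0)) by (field; lra).
      pose proof (Rabs_pos b). replace (2 * s0 * Rabs b / 2 * (1 + s * s)) with ((Rabs b * s0) * (1 + s*s)) by field. replace (2 * (Rabs b * s0)) with ((Rabs b * s0) * 2) by ring. apply Rmult_le_compat_l; [|lra]. apply Rmult_le_pos; lra. }
    pose proof (Hcirc w Hw1 ltac:(lra)). pose proof (Cmod_nonneg (phi w)).
    assert (Cmod (phi w) ^ 2 < 1) by nra.
    assert (Rabs b / 4 * Cmod (w - zeta)%C <= Rabs b / 4 * (2 * s0)).
    { apply Rmult_le_compat_l; [|lra]. pose proof (Rabs_pos b). lra. }
    assert (0 < Rabs b * s0). { apply Rmult_lt_0_compat; [apply Rabs_pos_lt|]; lra. }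
    nra.
Qed.

Lemma Rpower_pos x c : 0 < Rpower x c.
Proof. unfold Rpower. apply exp_pos. Qed.

Lemma hcirc_of (phi : C -> C) zeta c del0 m0 M0 : 0 < m0 ->
  (forall w, Cmod w = 1 -> 0 < Cmod (w - zeta)%C < del0 -> phi w <> phi zeta /\
     m0 <= (1 - Cmod (phi w) ^ 2) / Rpower (Cmod (phi zeta - phi w)%C) c <= M0) ->
  forall w, Cmod w = 1 -> 0 < Cmod (w - zeta)%C < del0 -> Cmod (phi w) < 1.
Proof. intros Hm H w Hw Hd. destruct (H w Hw Hd) as [_ [H1 _]].
  set (Y := Rpower (Cmod (phi zeta - phi w)%C) c) in *. assert (0 < Y) by apply Rpower_pos.
  assert (0 < 1 - Cmod (phi w) ^ 2).
  { replace (1 - Cmod (phi w) ^ 2) with ((1 - Cmod (phi w) ^ 2) / Y * Y) by (field; lra).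
    apply Rmult_lt_0_compat; lra. }
  pose proof (Cmod_nonneg (phi w)). nra. Qed.

Lemma u_inside (phi : C -> C) zeta del0 :
  Cmod zeta = 1 -> (forall z, Cmod z < 1 -> Cmod (phi z) < 1) ->
  (forall w, Cmod w = 1 -> 0 < Cmod (w - zeta)%C < del0 -> Cmod (phi w) < 1) ->
  forall u, Cmod (u - zeta)%C < del0 -> u <> RtoC 0 -> 1 <= Cmod u -> u <> zeta ->
  phi (/ Cconj u)%C = RtoC 0 \/ 1 < Cmod (/ Cconj (phi (/ Cconj u)))%C.
Proof. intros Hz Hself Hcirc u Hu Hu0 Hu1 Hne.
  assert (HP : Cmod (phi (/ Cconj u)%C) < 1).
  { destruct (Req_dec (Cmod u) 1) as [E|E].
    - rewrite (rho_unit u E). apply Hcirc; auto. split; auto. apply Cmod_pos. intro E2. apply Hne.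
      replace u with (u - zeta + zeta)%C by ring. rewrite E2. ring.
    - apply Hself. rewrite rho_mod. rewrite <- Rinv_1. apply Rinv_lt_contravar; lra. }
  destruct (Ceq_dec (phi (/ Cconj u)%C) (RtoC 0)) as [E|E]; [now left|right].
  rewrite rho_mod. pose proof (Cmod_pos _ E). rewrite <- Rinv_1. apply Rinv_lt_contravar; lra. Qed.

Lemma rho_formula u : u <> RtoC 0 -> (/ Cconj u)%C = (RtoC (/ (Cmod u ^ 2)) * u)%C.
Proof. intros H. pose proof (Cmod_pos _ H). rewrite Cmod_sq. pose proof (Cmod_sq u).
  destruct u as [a b]; simpl in *.
  assert (a * a + b * b <> 0). { intro E. rewrite E in H1. nra. }
  unfold Cinv, Cconj; simpl. apply injective_projections; simpl; field; auto. Qed.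

Lemma Cmod_scal_unit (r : R) z : 0 <= r -> Cmod z = 1 -> Cmod (RtoC r * z)%C = r.
Proof. intros. rewrite Cmod_mult, H0, Cmod_RtoC_pos; auto; ring. Qed.

Lemma step4 (phi sigma : C -> C) zeta n D del0 m0 M0 r1 :
  Cmod zeta = 1 -> Cmod (phi zeta) = 1 -> (forall z, Cmod z < 1 -> Cmod (phi z) < 1) -> (2 <= n)%nat ->
  0 < del0 -> 0 < m0 -> 0 < M0 ->
  (forall w, Cmod w = 1 -> 0 < Cmod (w - zeta)%C < del0 -> phi w <> phi zeta /\
     m0 <= (1 - Cmod (phi w) ^ 2) / Rpower (Cmod (phi zeta - phi w)%C) (INR n) <= M0) ->
  sigma (phi zeta) = zeta -> holo sigma (phi zeta) -> 0 < r1 ->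
  (forall w, Cmod (w - phi zeta)%C < r1 -> (/ Cconj (phi (/ Cconj (sigma w))))%C = w) ->
  C1est phi zeta D -> D <> RtoC 0 -> 0 < Re (Cconj (phi zeta) * D * zeta)%C ->
  exists del m M, 0 < del /\ 0 < m /\ 0 < M /\ forall w, Cmod w = 1 -> 0 < Cmod (w - phi zeta)%C < del ->
    sigma w <> sigma (phi zeta) /\
    m <= (1 - Cmod (sigma w) ^ 2) / Rpower (Cmod (sigma (phi zeta) - sigma w)%C) (INR n) <= M.
Proof.
  intros Hz Hl Hself Hn Hd0 Hm0 HM0 Hrat Hs Hh Hr1 Hbr HC1 HD Hkr.
  set (lam := phi zeta) in *.
  pose proof (hcirc_of phi zeta _ del0 m0 M0 Hm0 Hrat) as Hcirc.
  set (K := Cmod D). assert (HK : 0 < K) by now apply Cmod_pos.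
  set (kr := Re (Cconj lam * D * zeta)%C) in *.
  set (eps := Rmin (kr/8) (K/2)).
  assert (Heps : 0 < eps /\ eps <= kr/8 /\ eps <= K/2).
  { unfold eps. pose proof (Rmin_l (kr/8) (K/2)). pose proof (Rmin_r (kr/8) (K/2)).
    pose proof (Rmin_pos (kr/8) (K/2) ltac:(lra) ltac:(lra)). lra. }
  destruct (HC1 eps ltac:(lra)) as [d1 [Hd1 H1]].
  set (C1 := 8 * K + 4 * K ^ 2). assert (HC1p : 0 < C1) by (unfold C1; nra).
  set (Cu := M0 * (2 * K) ^ n / kr).
  assert (HCu : 0 < Cu). { unfold Cu. apply Rdiv_lt_0_compat; auto. apply Rmult_lt_0_compat; auto. apply pow_lt; lra. }
  set (ds := Rmin (Rmin d1 del0) (Rmin 1 (Rmin (1/(2*K)) (Rmin (kr/(4*K*(2*K+1))) (1/(2*Cu+1)))))).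
  assert (Hds : 0 < ds /\ ds <= d1 /\ ds <= del0 /\ ds <= 1 /\ 2 * K * ds <= 1 /\
                K * (2 * K + 1) * ds <= kr / 4 /\ Cu * ds <= 1/2).
  { unfold ds.
    pose proof (Rmin_l (Rmin d1 del0) (Rmin 1 (Rmin (1/(2*K)) (Rmin (kr/(4*K*(2*K+1))) (1/(2*Cu+1)))))).
    pose proof (Rmin_r (Rmin d1 del0) (Rmin 1 (Rmin (1/(2*K)) (Rmin (kr/(4*K*(2*K+1))) (1/(2*Cu+1)))))).
    pose proof (Rmin_l d1 del0). pose proof (Rmin_r d1 del0).
    pose proof (Rmin_l 1 (Rmin (1/(2*K)) (Rmin (kr/(4*K*(2*K+1))) (1/(2*Cu+1))))).
    pose proof (Rmin_r 1 (Rmin (1/(2*K)) (Rmin (kr/(4*K*(2*K+1))) (1/(2*Cu+1))))).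
    pose proof (Rmin_l (1/(2*K)) (Rmin (kr/(4*K*(2*K+1))) (1/(2*Cu+1)))).
    pose proof (Rmin_r (1/(2*K)) (Rmin (kr/(4*K*(2*K+1))) (1/(2*Cu+1)))).
    pose proof (Rmin_l (kr/(4*K*(2*K+1))) (1/(2*Cu+1))).
    pose proof (Rmin_r (kr/(4*K*(2*K+1))) (1/(2*Cu+1))).
    set (X := Rmin (Rmin d1 del0) (Rmin 1 (Rmin (1/(2*K)) (Rmin (kr/(4*K*(2*K+1))) (1/(2*Cu+1)))))) in *.
    assert (0 < X). { unfold X. repeat apply Rmin_pos; try apply Rdiv_lt_0_compat; try lra.
      repeat apply Rmult_lt_0_compat; lra. }
    repeat split; try lra.
    + apply Rmult_le_reg_r with (/(2*K)). apply Rinv_0_lt_compat; lra.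
      replace (2 * K * X * / (2 * K)) with X by (field; lra). lra.
    + apply Rmult_le_reg_r with (/(K*(2*K+1))). apply Rinv_0_lt_compat; apply Rmult_lt_0_compat; lra.
      replace (K * (2 * K + 1) * X * / (K * (2 * K + 1))) with X by (field; lra).
      replace (kr / 4 * / (K * (2 * K + 1))) with (kr / (4 * K * (2 * K + 1))) by (field; lra). lra.
    + assert (X * (2 * Cu + 1) <= 1).
      { replace 1 with ((1/(2*Cu+1)) * (2*Cu+1)) at 2 by (field; lra). apply Rmult_le_compat_r; lra. }
      nra. }
  destruct Hds as [Hds0 [Hds1 [Hds2 [Hds3 [Hds4 [Hds5 Hds6]]]]]].
  set (eta := ds / 2).
  destruct (holo_lip _ _ Hh) as [Ks [dsg [HKs [Hdsg Hlip]]]].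
  set (dw := Rmin (Rmin r1 dsg) (eta / Ks)).
  assert (Hdw : 0 < dw /\ dw <= r1 /\ dw <= dsg /\ Ks * dw <= eta).
  { unfold dw. pose proof (Rmin_l (Rmin r1 dsg) (eta / Ks)). pose proof (Rmin_r (Rmin r1 dsg) (eta / Ks)).
    pose proof (Rmin_l r1 dsg). pose proof (Rmin_r r1 dsg).
    assert (Hek : 0 < eta / Ks) by (apply Rdiv_lt_0_compat; unfold eta; lra).
    pose proof (Rmin_pos (Rmin r1 dsg) (eta/Ks) (Rmin_pos r1 dsg Hr1 Hdsg) Hek).
    repeat split; try lra.
    apply Rle_trans with (Ks*(eta/Ks)); [apply Rmult_le_compat_l; lra| right; field; lra]. }
  destruct Hdw as [Hdw0 [Hdw1 [Hdw2 Hdw3]]].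
  set (m := m0 * (K/2) ^ n / C1 / (2 * (3/2) ^ n)).
  set (M := 2 * Cu * 2 ^ n).
  exists dw, m, M. split; [auto|]. split.
  { unfold m. apply Rdiv_lt_0_compat. apply Rdiv_lt_0_compat; auto. apply Rmult_lt_0_compat; auto.
    apply pow_lt; lra. apply Rmult_lt_0_compat; [lra|]. apply pow_lt; lra. }
  split. { unfold M. apply Rmult_lt_0_compat; [lra|]. apply pow_lt; lra. }
  intros w Hw1 Hwd. rewrite Hs.
  set (u := sigma w).
  assert (Hu : Cmod (u - zeta)%C < eta).
  { unfold u. rewrite <- Hs. eapply Rle_lt_trans. apply Hlip. lra.
    apply Rlt_le_trans with (Ks * dw); [apply Rmult_lt_compat_l; lra | lra]. }
  assert (Heta : eta <= 1/2 /\ 2 * eta = ds) by (unfold eta; lra).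
  assert (Hz0 : zeta <> RtoC 0). { intro E. rewrite E, Cmod_0 in Hz. lra. }
  assert (Hl0 : lam <> RtoC 0). { intro E. rewrite E, Cmod_0 in Hl. lra. }
  assert (Hum : 1/2 <= Cmod u). { pose proof (Cmod_rev zeta u). rewrite Cmod_sym in H. lra. }
  assert (Hu0 : u <> RtoC 0). { intro E. rewrite E, Cmod_0 in Hum. lra. }
  assert (Hbw := Hbr w ltac:(lra)). fold u in Hbw.
  set (v := (/ Cconj u)%C) in *.
  assert (Hpv0 : phi v <> RtoC 0).
  { intro E. rewrite E, Cconj_zero, Cinv_zero in Hbw. rewrite <- Hbw, Cmod_0 in Hw1. lra. }
  assert (Hpv : phi v = w). { rewrite <- (rho_unit w Hw1). rewrite <- Hbw. now rewrite rho_invol. }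
  assert (Hune : u <> zeta).
  { intro E. assert (v = zeta) by (unfold v; rewrite E; apply rho_unit; auto).
    rewrite H in Hpv. fold lam in Hpv. rewrite Hpv in Hwd. replace (w - w)%C with (RtoC 0) in Hwd by ring.
    rewrite Cmod_0 in Hwd. lra. }
  assert (Hu1 : Cmod u < 1).
  { destruct (Rlt_or_le (Cmod u) 1) as [|Hge]; auto. exfalso.
    destruct (u_inside phi zeta del0 Hz Hself Hcirc u ltac:(lra) Hu0 Hge Hune) as [E|E];
      fold v in E.
    - apply Hpv0; auto.
    - rewrite Hbw in E. lra. }
  set (a := Cmod u).
  set (t := / a - 1).
  assert (Ht : 0 < t). { unfold t. assert (1 < / a). { rewrite <- Rinv_1. apply Rinv_lt_contravar; unfold a; lra. } lra. }
  set (v' := (RtoC (/ a) * u)%C).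
  assert (Hv'1 : Cmod v' = 1). { unfold v'. rewrite Cmod_mult, Cmod_RtoC_pos. unfold a; field. unfold a; lra.
    left. apply Rinv_0_lt_compat. unfold a; lra. }
  assert (Hvv' : v = (RtoC (1 + t) * v')%C).
  { unfold v. rewrite rho_formula by auto. unfold v', t. fold a.
    apply injective_projections; simpl; field; unfold a; lra. }
  assert (Huv' : u = (RtoC a * v')%C).
  { unfold v'. apply injective_projections; simpl; field; unfold a; lra. }
  assert (Hdvv : Cmod (v - v')%C = t).
  { rewrite Hvv'. replace (RtoC (1 + t) * v' - v')%C with (RtoC t * v')%C by (apply injective_projections; simpl; ring).
    apply Cmod_scal_unit; lra. }
  assert (Hduv : Cmod (u - v')%C = 1 - a).
  { rewrite Huv'. replace (RtoC a * v' - v')%C with (- (RtoC (1 - a) * v'))%C by (apply injective_projections; simpl; ring).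
    rewrite Cmod_opp. apply Cmod_scal_unit; auto. unfold a; lra. }
  assert (Ha1 : 1 - a <= Cmod (u - zeta)%C).
  { pose proof (Cmod_rev zeta u). rewrite Cmod_sym in H. unfold a; lra. }
  set (d := Cmod (v' - zeta)%C).
  assert (Hd : d <= 2 * Cmod (u - zeta)%C).
  { unfold d. pose proof (Cmod_tri3 v' u zeta). rewrite Cmod_sym in Hduv. lra. }
  assert (Hvz : Cmod (v - zeta)%C <= 2 * Cmod (u - zeta)%C).
  { unfold v. rewrite <- (rho_unit zeta Hz) at 1. rewrite rho_dist by auto. rewrite Hz, Rmult_1_r.
    apply Rmult_le_reg_r with (Cmod u); [lra|]. unfold Rdiv. rewrite Rmult_assoc, Rinv_l by lra.
    assert (2 * Cmod (u - zeta)%C * Cmod u >= 2 * Cmod (u - zeta)%C * (1/2)).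
    { apply Rle_ge, Rmult_le_compat_l; [|lra]. pose proof (Cmod_nonneg (u - zeta)%C). lra. }
    lra. }
  assert (Htv : t <= Cmod (v - zeta)%C).
  { assert (Cmod v = 1 + t). { unfold v. rewrite rho_mod. unfold t. fold a. ring. }
    pose proof (Cmod_rev v zeta). lra. }
  assert (Hdd : d < ds /\ Cmod (v - zeta)%C < ds /\ t < ds) by lra.
  assert (Hzz : Cmod (zeta - zeta)%C = 0). { replace (zeta - zeta)%C with (RtoC 0) by ring. apply Cmod_0. }
  pose proof (H1 v v' ltac:(lra) ltac:(fold d; lra)) as Hx. rewrite Hdvv, Hpv in Hx.
  pose proof (H1 v' zeta ltac:(fold d; lra) ltac:(lra)) as Hp.
  replace (v' - zeta - (zeta - zeta))%C with (v' - zeta)%C in Hp by ring. fold d lam in Hp.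
  set (P := phi v') in *.
  set (rho := Cmod (lam - P)%C).
  assert (HDd : Cmod (D * (v' - zeta))%C = K * d) by (rewrite Cmod_mult; reflexivity).
  assert (Hrho : K * d / 2 <= rho <= 2 * K * d).
  { unfold rho. rewrite Cmod_sym.
    replace (P - lam)%C with (D * (v' - zeta) + (P - lam - D * (v' - zeta)))%C by ring.
    pose proof (Cmod_triangle (D * (v' - zeta))%C (P - lam - D * (v' - zeta))%C).
    pose proof (Cmod_rev (D * (v' - zeta) + (P - lam - D * (v' - zeta)))%C (D * (v' - zeta))%C).
    replace (D * (v' - zeta) + (P - lam - D * (v' - zeta)) - D * (v' - zeta))%C
      with (P - lam - D * (v' - zeta))%C in H0 by ring.
    pose proof (Cmod_rev (D * (v' - zeta))%C (- (P - lam - D * (v' - zeta)))%C).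
    rewrite Cmod_opp in H2.
    replace (D * (v' - zeta) - - (P - lam - D * (v' - zeta)))%C with (D * (v' - zeta) + (P - lam - D * (v' - zeta)))%C in H2 by ring.
    assert (0 <= d) by apply Cmod_nonneg.
    assert (eps * d <= K / 2 * d) by (apply Rmult_le_compat_r; lra).
    lra. }
  assert (Hd0' : 0 <= d) by apply Cmod_nonneg.
  assert (HP2 : Cmod P <= 2).
  { pose proof (Cmod_tri3 P lam (RtoC 0)). replace (P - 0)%C with P in H by ring.
    replace (lam - 0)%C with lam in H by ring. rewrite Cmod_sym in H. fold rho in H.
    assert (2 * K * d <= 2 * K * ds) by (apply Rmult_le_compat_l; lra). lra. }
  assert (HP1 : 1 - 2 * K * d <= Cmod P).
  { pose proof (Cmod_rev lam P). fold rho in H. lra. }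
  set (x := (w - P)%C).
  set (e := (x - D * (v - v'))%C).
  assert (He : Cmod e <= eps * t) by (unfold e, x; auto).
  assert (Hvv2 : (v - v')%C = (RtoC t * v')%C).
  { rewrite Hvv'. apply injective_projections; simpl; ring. }
  assert (Hxm : Cmod x <= 2 * K * t).
  { replace x with (D * (v - v') + e)%C by (unfold e; ring).
    pose proof (Cmod_triangle (D * (v - v'))%C e). rewrite Cmod_mult, Hdvv in H. fold K in H.
    assert (eps * t <= K * t) by (apply Rmult_le_compat_r; lra). lra. }
  assert (Hexp : 1 = Cmod P ^ 2 + 2 * Re (Cconj P * x)%C + Cmod x ^ 2).
  { rewrite <- Cmod_sq_expand. replace (P + x)%C with w by (unfold x; ring). rewrite Hw1. ring. }
  assert (Hdec : (Cconj P * x)%C = (RtoC t * (Cconj P * D * v') + Cconj P * e)%C).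
  { replace x with (D * (v - v') + e)%C by (unfold e; ring). rewrite Hvv2. ring. }
  assert (Hkap : Cmod (Cconj P * D * v' - Cconj lam * D * zeta)%C <= kr / 4).
  { replace (Cconj P * D * v' - Cconj lam * D * zeta)%C with
      (D * (Cconj (P - lam) * v' + Cconj lam * (v' - zeta)))%C by (rewrite Cminus_conj; ring).
    rewrite Cmod_mult. fold K. eapply Rle_trans.
    apply Rmult_le_compat_l. lra. apply Cmod_triangle.
    rewrite !Cmod_mult, !Cmod_conj, Hv'1, Hl. fold d. rewrite Cmod_sym. fold rho.
    assert (K * (rho * 1 + 1 * d) <= K * (2 * K + 1) * d).
    { replace (K * (2*K+1) * d) with (K * (2*K*d + d)) by ring. apply Rmult_le_compat_l; lra. }
    assert (K * (2 * K + 1) * d <= K * (2 * K + 1) * ds).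
    { apply Rmult_le_compat_l; [|lra]. apply Rmult_le_pos; lra. }
    lra. }
  assert (HRe : 3 * kr / 4 <= Re (Cconj P * D * v')%C).
  { replace (Cconj P * D * v')%C with (Cconj lam * D * zeta + (Cconj P * D * v' - Cconj lam * D * zeta))%C by ring.
    rewrite Re_plus. fold kr. pose proof (Re_ge_Cmod (Cconj P * D * v' - Cconj lam * D * zeta)%C). lra. }
  assert (HRe2 : Rabs (Re (Cconj P * e)%C) <= 2 * eps * t).
  { pose proof (re_le_Cmod (Cconj P * e)%C). rewrite Cmod_mult, Cmod_conj in H.
    assert (Cmod P * Cmod e <= 2 * (eps * t)).
    { apply Rmult_le_compat; try apply Cmod_nonneg; lra. } lra. }
  set (Q := 1 - Cmod P ^ 2).
  assert (HQlow : t * kr <= Q).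
  { unfold Q. rewrite Hdec, Re_plus, Re_scal in Hexp.
    assert (t * (3 * kr / 4) <= t * Re (Cconj P * D * v')%C) by (apply Rmult_le_compat_l; lra).
    pose proof (pow2_ge_0 (Cmod x)). unfold Rabs in HRe2; destruct Rcase_abs in HRe2; nra. }
  assert (HQup : Q <= C1 * t).
  { unfold Q. pose proof (Re_le_Cmod (Cconj P * x)%C). rewrite Cmod_mult, Cmod_conj in H.
    assert (Cmod P * Cmod x <= 2 * (2 * K * t)) by (apply Rmult_le_compat; try apply Cmod_nonneg; lra).
    assert (Cmod x ^ 2 <= (2 * K * t) ^ 2) by (apply pow_incr; split; [apply Cmod_nonneg|lra]).
    assert ((2 * K * t) ^ 2 <= 4 * K ^ 2 * t).
    { replace ((2*K*t)^2) with ((4*K^2)*(t*t)) by ring. apply Rmult_le_compat_l; nra. }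
    unfold C1. nra. }
  assert (Hdpos : 0 < d).
  { destruct (Req_dec d 0) as [E|E]; [|lra]. exfalso. rewrite E in HP1.
    assert (1 <= Cmod P) by lra. unfold Q in HQlow. assert (0 < t * kr) by (apply Rmult_lt_0_compat; lra). assert (1 <= Cmod P ^ 2) by nra. lra. }
  assert (Hdel : d < del0) by lra.
  destruct (Hrat v' Hv'1 (conj Hdpos Hdel)) as [HPne [Hlo Hhi]]. fold P rho in Hlo, Hhi.
  assert (Hrho0 : 0 < rho). { assert (0 < K * d / 2) by (apply Rdiv_lt_0_compat; [apply Rmult_lt_0_compat|]; lra). lra. }
  rewrite Rpower_pow in Hlo, Hhi by auto. fold Q in Hlo, Hhi.
  set (Y := rho ^ n) in *. assert (HY : 0 < Y) by (apply pow_lt; auto).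
  assert (HQm : m0 * Y <= Q /\ Q <= M0 * Y).
  { split.
    - replace Q with (Q / Y * Y) by (field; lra). apply Rmult_le_compat_r; lra.
    - replace Q with (Q / Y * Y) by (field; lra). apply Rmult_le_compat_r; lra. }
  assert (HYb : (K / 2) ^ n * d ^ n <= Y /\ Y <= (2 * K) ^ n * d ^ n).
  { rewrite <- !Rpow_mult_distr. unfold Y. split; apply pow_incr; split; try lra; try (apply Rmult_le_pos; lra); replace (K / 2 * d) with (K * d / 2) by field; lra.
    }
  set (dn := d ^ n) in *. assert (Hdn0 : 0 < dn) by (apply pow_lt; auto).
  assert (Htup : t <= Cu * dn).
  { apply Rmult_le_reg_r with kr; auto. unfold Cu. replace (M0 * (2 * K) ^ n / kr * dn * kr) with (M0 * ((2 * K) ^ n * dn)) by (field; lra).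
    assert (M0 * Y <= M0 * ((2 * K) ^ n * dn)) by (apply Rmult_le_compat_l; lra). lra. }
  assert (Htlo : m0 * (K / 2) ^ n * dn / C1 <= t).
  { apply Rmult_le_reg_r with C1; auto. replace (m0 * (K / 2) ^ n * dn / C1 * C1) with (m0 * ((K / 2) ^ n * dn)) by (field; lra).
    assert (m0 * ((K / 2) ^ n * dn) <= m0 * Y) by (apply Rmult_le_compat_l; lra). lra. }
  assert (Hdnd : dn <= d * d).
  { unfold dn. replace n with (2 + (n - 2))%nat by lia. rewrite pow_add.
    assert (d ^ (n - 2) <= 1). { rewrite <- (pow1 (n - 2)). apply pow_incr. lra. }
    assert (0 <= d ^ 2) by (apply pow_le; lra).
    replace (d * d) with (d ^ 2 * 1) by ring. apply Rmult_le_compat_l; auto. }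
  assert (Htd : t <= d / 2).
  { assert (Cu * dn <= Cu * (d * d)) by (apply Rmult_le_compat_l; lra).
    assert (Cu * d <= Cu * ds) by (apply Rmult_le_compat_l; lra).
    assert (Cu * (d * d) = (Cu * d) * d) by ring.
    assert ((Cu * d) * d <= (1/2) * d) by (apply Rmult_le_compat_r; lra). lra. }
  assert (Ha2 : 1 / 2 <= a < 1) by (unfold a; lra).
  assert (Hta : t = (1 - a) / a) by (unfold t; field; lra).
  assert (H1a : 1 - a <= t). { rewrite Hta. apply Rmult_le_reg_r with a; [lra|].
    replace ((1 - a) / a * a) with (1 - a) by (field; lra). nra. }
  set (A := 1 - a ^ 2).
  assert (HA : t / 2 <= A <= 2 * t).
  { unfold A. rewrite Hta. split.
    - apply Rmult_le_reg_r with (2 * a); [lra|].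
      replace ((1 - a) / a / 2 * (2 * a)) with ((1 - a) * 1) by (field; lra).
      replace ((1 - a ^ 2) * (2 * a)) with ((1 - a) * (2 * a * (1 + a))) by ring.
      apply Rmult_le_compat_l; nra.
    - apply Rmult_le_reg_r with a; [lra|].
      replace (2 * ((1 - a) / a) * a) with ((1 - a) * 2) by (field; lra).
      replace ((1 - a ^ 2) * a) with ((1 - a) * ((1 + a) * a)) by ring.
      apply Rmult_le_compat_l; nra. }
  set (B := Cmod (zeta - u)%C).
  assert (HB : d / 2 <= B <= 3 * d / 2).
  { unfold B. pose proof (Cmod_tri3 zeta v' u). pose proof (Cmod_tri3 zeta u v').
    rewrite (Cmod_sym zeta v') in H. fold d in H. rewrite (Cmod_sym zeta v') in H0. fold d in H0.
    pose proof (Cmod_sym u v'). lra. }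
  assert (HB0 : 0 < B) by lra.
  split; [exact Hune|]. fold u. fold a. fold A. fold B.
  rewrite Rpower_pow by auto.
  assert (HBn : (d / 2) ^ n <= B ^ n /\ B ^ n <= (3 * d / 2) ^ n).
  { split; apply pow_incr; lra. }
  assert (HBn0 : 0 < B ^ n) by (apply pow_lt; auto).
  replace ((d / 2) ^ n) with ((1/2) ^ n * dn) in HBn by (unfold dn; rewrite <- Rpow_mult_distr; f_equal; field).
  replace ((3 * d / 2) ^ n) with ((3/2) ^ n * dn) in HBn by (unfold dn; rewrite <- Rpow_mult_distr; f_equal; field).
  assert (H32 : 0 < (3/2) ^ n) by (apply pow_lt; lra).
  assert (H12 : 0 < (1/2) ^ n) by (apply pow_lt; lra).
  assert (H2n : 2 ^ n * (1/2) ^ n = 1) by (rewrite <- Rpow_mult_distr; replace (2 * (1/2)) with 1 by field; apply pow1).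
  split.
  - apply Rmult_le_reg_r with (B ^ n); auto. replace (A / B ^ n * B ^ n) with A by (field; lra).
    apply Rle_trans with (m * ((3/2) ^ n * dn)).
    + apply Rmult_le_compat_l; [|lra]. unfold m. left. apply Rdiv_lt_0_compat. apply Rdiv_lt_0_compat; auto.
      apply Rmult_lt_0_compat; auto. apply pow_lt; lra. lra.
    + unfold m. replace (m0 * (K / 2) ^ n / C1 / (2 * (3 / 2) ^ n) * ((3 / 2) ^ n * dn))
        with (m0 * (K / 2) ^ n * dn / C1 / 2) by (field; lra). lra.
  - apply Rmult_le_reg_r with (B ^ n); auto. replace (A / B ^ n * B ^ n) with A by (field; lra).
    apply Rle_trans with (M * ((1/2) ^ n * dn)).
    + unfold M. replace (2 * Cu * 2 ^ n * ((1 / 2) ^ n * dn)) with (2 * Cu * dn * (2 ^ n * (1/2) ^ n)) by ring.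
      rewrite H2n. lra.
    + apply Rmult_le_compat_l; [|lra]. unfold M. left. apply Rmult_lt_0_compat; [lra|]. apply pow_lt; lra.
Qed.

Lemma phi_e_eq phi x : phi_e phi x = (/ Cconj (phi (/ Cconj x)))%C.
Proof. unfold phi_e. rewrite !rho_eq. reflexivity. Qed.

Lemma n0_contra (phi : C -> C) zeta D del0 m0 M0 :
  Cmod zeta = 1 -> Cmod (phi zeta) = 1 -> 0 < del0 -> 0 < m0 ->
  (forall w, Cmod w = 1 -> 0 < Cmod (w - zeta)%C < del0 -> phi w <> phi zeta /\
     m0 <= (1 - Cmod (phi w) ^ 2) / Rpower (Cmod (phi zeta - phi w)%C) (INR 0) <= M0) ->
  C1est phi zeta D -> False.
Proof.
  intros Hz Hl Hd0 Hm0 Hrat HC1.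
  pose proof (hcirc_of phi zeta _ del0 m0 M0 Hm0 Hrat) as Hcirc.
  destruct (HC1 1 ltac:(lra)) as [d1 [Hd1 H1]].
  set (K := Cmod D). assert (0 <= K) by apply Cmod_nonneg.
  set (s := Rmin (Rmin d1 del0) (m0 / (4 * (K + 1))) / 4).
  assert (Hs : 0 < s /\ 2 * s < d1 /\ 2 * s < del0 /\ 4 * (K + 1) * (2 * s) < m0).
  { unfold s. pose proof (Rmin_l (Rmin d1 del0) (m0 / (4 * (K + 1)))).
    pose proof (Rmin_r (Rmin d1 del0) (m0 / (4 * (K + 1)))).
    pose proof (Rmin_l d1 del0). pose proof (Rmin_r d1 del0).
    assert (Hq : 0 < m0 / (4 * (K+1))) by (apply Rdiv_lt_0_compat; lra).
    pose proof (Rmin_pos _ _ (Rmin_pos d1 del0 Hd1 Hd0) Hq).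
    set (X := Rmin (Rmin d1 del0) (m0 / (4 * (K + 1)))) in *.
    repeat split; try lra.
    assert (4 * (K+1) * X <= m0).
    { apply Rle_trans with (4 * (K+1) * (m0 / (4 * (K+1)))). apply Rmult_le_compat_l; lra.
      right; field; lra. }
    assert (0 < 4 * (K+1) * X) by (apply Rmult_lt_0_compat; lra). lra. }
  destruct Hs as [Hs0 [Hs1 [Hs2 Hs3]]].
  set (w := (zeta * ecirc s)%C).
  assert (Hw1 : Cmod w = 1). { unfold w. rewrite Cmod_mult, Hz, ecirc_mod. ring. }
  assert (Hwd : 0 < Cmod (w - zeta)%C <= 2 * s).
  { replace (w - zeta)%C with (zeta * (ecirc s - 1))%C by (unfold w; ring).
    rewrite Cmod_mult, Hz, Rmult_1_l. split.
    - apply Cmod_pos. intro E. apply (ecirc_neq1 s ltac:(lra)). replace (ecirc s) with (ecirc s - 1 + 1)%C by ring.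
      rewrite E. ring.
    - rewrite <- (Rabs_right s) at 2 by lra. apply ecirc_sub. }
  destruct (Hrat w Hw1 ltac:(lra)) as [_ [Hlo _]].
  unfold Rpower in Hlo. simpl INR in Hlo. rewrite Rmult_0_l, exp_0, Rdiv_1_r in Hlo.
  assert (Hzz : Cmod (zeta - zeta)%C = 0). { replace (zeta - zeta)%C with (RtoC 0) by ring. apply Cmod_0. }
  specialize (H1 w zeta ltac:(lra) ltac:(lra)). replace (w - zeta - (zeta - zeta))%C with (w - zeta)%C in H1 by ring.
  assert (Hpl : Cmod (phi w - phi zeta)%C <= (K + 1) * (2 * s)).
  { replace (phi w - phi zeta)%C with (D * (w - zeta) + (phi w - phi zeta - D * (w - zeta)))%C by ring.
    eapply Rle_trans. apply Cmod_triangle. rewrite Cmod_mult. fold K.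
    assert ((K + 1) * Cmod (w - zeta)%C <= (K + 1) * (2 * s)) by (apply Rmult_le_compat_l; lra). lra. }
  pose proof (Cmod_rev (phi zeta) (phi w)). rewrite Cmod_sym in H0.
  pose proof (Hcirc w Hw1 ltac:(lra)). pose proof (Cmod_nonneg (phi w)).
  nra.
Qed.

Theorem mainTheorem10 (phi : Cx -> Cx) (zeta : Cx) (n : nat) (sigma : Cx -> Cx) :
  RationalSelfMap phi ->
  Nat.Even n ->
  OrderOfContact phi zeta (INR n) ->
  BranchOfInverse (phi_e phi) sigma (phi zeta) zeta ->
  OrderOfContact sigma (phi zeta) (INR n).
Proof.
  intros [p [q [Hq [Hpq Hself]]]] Hev [Hz [_ [_ [Hl [del0 [m0 [M0 [Hd0 [Hm0 [HM0 Hrat]]]]]]]]]] [Hs [r1 [Hr1 Hbr]]].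
  rewrite Cabs_mod in Hz, Hl.
  assert (Hself' : forall z, Cmod z < 1 -> Cmod (phi z) < 1).
  { intros z Hz'. rewrite <- Cabs_mod. apply Hself. now rewrite Cabs_mod. }
  assert (Hpq' : forall z, peval q z <> RtoC 0 -> phi z = (peval p z / peval q z)%C).
  { intros z Hz'. rewrite <- Cdiv_eq. apply Hpq. exact Hz'. }
  assert (Hq0 : peval q zeta <> RtoC 0). { apply Hq. rewrite Cabs_mod. lra. }
  assert (Hrat' : forall w, Cmod w = 1 -> 0 < Cmod (w - zeta)%C < del0 -> phi w <> phi zeta /\
     m0 <= (1 - Cmod (phi w) ^ 2) / Rpower (Cmod (phi zeta - phi w)%C) (INR n) <= M0).
  { intros w Hw Hwd. rewrite <- !Cabs_mod. apply Hrat. now rewrite Cabs_mod. now rewrite Cabs_mod. }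
  assert (Hbr' : forall w, Cmod (w - phi zeta)%C < r1 -> holo sigma w /\
     (/ Cconj (phi (/ Cconj (sigma w))))%C = w).
  { intros w Hw. rewrite <- Cabs_mod in Hw. destruct (Hbr w Hw) as [H1 H2]. split.
    now apply holo_eq. now rewrite <- phi_e_eq. }
  clear Hq Hpq Hself Hrat Hbr.
  set (lam := phi zeta) in *.
  destruct (step1 p q phi zeta Hq0 Hpq') as [D HC1].
  assert (Hh : holo sigma lam).
  { apply (Hbr' lam). replace (lam - lam)%C with (RtoC 0) by ring. rewrite Cmod_0. lra. }
  assert (Hbr2 : forall w, Cmod (w - lam)%C < r1 -> (/ Cconj (phi (/ Cconj (sigma w))))%C = w)
    by (intros; apply Hbr'; auto).
  assert (HD : D <> RtoC 0) by exact (step2 phi sigma zeta D r1 Hz Hl Hs Hh Hr1 Hbr2 HC1).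
  pose proof (hcirc_of phi zeta _ del0 m0 M0 Hm0 Hrat') as Hcirc.
  pose proof (step3 phi zeta D del0 Hz Hl Hself' Hd0 Hcirc HC1 HD) as Hkr.
  assert (Hn : (2 <= n)%nat).
  { destruct Hev as [k Hk]. destruct k. simpl in Hk. subst n. exfalso.
    exact (n0_contra phi zeta D del0 m0 M0 Hz Hl Hd0 Hm0 Hrat' HC1). lia. }
  destruct (step4 phi sigma zeta n D del0 m0 M0 r1 Hz Hl Hself' Hn Hd0 Hm0 HM0 Hrat' Hs Hh Hr1 Hbr2 HC1 HD Hkr)
    as [del [m [M [Hdel [Hm [HM Hmain]]]]]].
  destruct (holo_lip _ _ Hh) as [Ks [dsg [HKs [Hdsg Hlip]]]].
  unfold OrderOfContact. rewrite !Cabs_mod. split; [exact Hl|].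
  split.
  { set (eta := Rmin del0 (1/2) / 2).
    assert (Heta : 0 < eta /\ eta < del0 /\ eta <= 1/4).
    { unfold eta. pose proof (Rmin_l del0 (1/2)). pose proof (Rmin_r del0 (1/2)).
      pose proof (Rmin_pos del0 (1/2) Hd0 ltac:(lra)). lra. }
    exists (Rmin (Rmin r1 dsg) (Rmin (eta / Ks) (1/2))).
    assert (Hek : 0 < eta / Ks) by (apply Rdiv_lt_0_compat; lra).
    split. { repeat apply Rmin_pos; lra. }
    intros z Hzl Hz1. rewrite Cabs_mod, Csub_eq in Hzl. rewrite Cabs_mod in Hz1.
    pose proof (Rmin_l (Rmin r1 dsg) (Rmin (eta / Ks) (1/2))). pose proof (Rmin_r (Rmin r1 dsg) (Rmin (eta / Ks) (1/2))).
    pose proof (Rmin_l r1 dsg). pose proof (Rmin_r r1 dsg).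
    pose proof (Rmin_l (eta / Ks) (1/2)). pose proof (Rmin_r (eta / Ks) (1/2)).
    destruct (Hbr' z ltac:(lra)) as [Hhz Hbz]. split. now apply holo_eq.
    rewrite Cabs_mod. set (u := sigma z) in *.
    assert (Hu : Cmod (u - zeta)%C < eta).
    { unfold u. rewrite <- Hs. eapply Rle_lt_trans. apply Hlip. lra.
      apply Rlt_le_trans with (Ks * (eta / Ks)). apply Rmult_lt_compat_l; lra. right; field; lra. }
    assert (Hzm : 1/2 <= Cmod z). { pose proof (Cmod_rev lam z). rewrite Cmod_sym in H5. lra. }
    destruct (Rlt_or_le (Cmod u) 1) as [|Hge]; auto. exfalso.
    assert (Hu0 : u <> RtoC 0). { intro E. rewrite E, Cmod_0 in Hge. lra. }
    assert (Hune : u <> zeta).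
    { intro E. rewrite E in Hbz. rewrite (rho_unit zeta Hz) in Hbz. fold lam in Hbz.
      rewrite (rho_unit lam Hl) in Hbz. rewrite <- Hbz, Hl in Hz1. lra. }
    destruct (u_inside phi zeta del0 Hz Hself' Hcirc u ltac:(lra) Hu0 Hge Hune) as [E|E].
    - rewrite E, Cconj_zero, Cinv_zero in Hbz. rewrite <- Hbz, Cmod_0 in Hzm. lra.
    - rewrite Hbz in E. lra. }
  split.
  { intros eps He. exists (Rmin dsg (eps / Ks)).
    assert (0 < eps / Ks) by (apply Rdiv_lt_0_compat; lra).
    split. now apply Rmin_pos.
    intros z _ Hzl. rewrite !Cabs_mod, !Csub_eq in *.
    pose proof (Rmin_l dsg (eps / Ks)). pose proof (Rmin_r dsg (eps / Ks)).
    eapply Rle_lt_trans. apply Hlip. lra.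
    apply Rlt_le_trans with (Ks * (eps / Ks)). apply Rmult_lt_compat_l; lra. right; field; lra. }
  split. { rewrite Hs. exact Hz. }
  exists del, m, M. split; [auto|]. split; [auto|]. split; [auto|].
  intros w Hw Hwd. rewrite !Cabs_mod, !Csub_eq in *. apply Hmain; auto.
Qed.
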